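(* Under Hypothesis (H), define the functions $A_+:=n^2+(\mathrm{tr}S)^2-(\mathrm{tr}P)^2-(\mathrm{tr}(SP))^2+\mathrm{tr}(SPSP)-n-2n\,\mathrm{tr}(S)+2\,\mathrm{tr}(P)\mathrm{tr}(SP)$ and $A_-:=n^2+(\mathrm{tr}S)^2-(\mathrm{tr}P)^2-(\mathrm{tr}(SP))^2+\mathrm{tr}(SPSP)-n+2n\,\mathrm{tr}(S)-2\,\mathrm{tr}(P)\mathrm{tr}(SP)$ on $M$. Then: (i) $A_+\ge0$ and $A_-\ge0$ on $M$. (ii) If $\mathrm{rk}\,E_+(S)=1$ then $A_-\equiv0$. If $\mathrm{rk}\,E_+(S)\ge2$, then for every $x\in M$: $A_-(x)=0$ if and only if there exists $\varepsilon\in\{-1,1\}$ with $E_+(S)_x\subseteq E_\varepsilon(P)_x$. (iii) If $\mathrm{rk}\,E_-(S)=1$ then $A_+\equiv0$. If $\mathrm{rk}\,E_-(S)\ge2$, then for every $x\in M$: $A_+(x)=0$ if and only if there exists $\varepsilon\in\{-1,1\}$ with $E_-(S)_x\subseteq E_\varepsilon(P)_x$.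
   Context: Let $(M,g)$ be a Riemannian manifold of dimension $n$ with Levi-Civita connection $\nabla$; vectors and 1-forms are identified via $g$. For vectors $X,Y$, $X\odot Y$ is the endomorphism $Z\mapsto\langle X,Z\rangle Y+\langle Y,Z\rangle X$. Hypothesis (H): $M$ is oriented, compact, connected; $\theta$ is a 1-form on $M$, not identically zero (the Lee form of the Weyl connection $D_XY=\nabla_XY+\theta(Y)X+\theta(X)Y-\langle X,Y\rangle\theta^\sharp$); $S$ is a $g$-orthogonal involution of $\mathrm{T}M$, $S\neq\pm\mathrm{Id}$, with $DS=0$, equivalently $\nabla_XS=SX\odot\theta-S\theta\odot X$ for all $X$; $P$ is a $\nabla$-parallel $g$-orthogonal involution of $\mathrm{T}M$, $P\neq\pm\mathrm{Id}$. For an involution $F$, $E_+(F)$ and $E_-(F)$ denote its $+1$ and $-1$ eigenbundles. *)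

(* Defs.v *)
From HB Require Import structures.
From mathcomp Require Import all_boot all_order all_algebra.
From mathcomp Require Import reals.
Set Implicit Arguments. Unset Strict Implicit. Unset Printing Implicit Defensive.
Import Order.TTheory GRing.Theory Num.Theory.
Local Open Scope ring_scope.

(* Pointwise model: at each point x of M, an endomorphism field F is given by
   its matrix F x in a g-orthonormal frame of T_xM, so g is the standard
   inner product and the adjoint is the transpose. *)

Definition orth_involution (R : realType) (n : nat) (F : 'M[R]_n) : Prop :=
  F *m F = 1%:M /\ F^T *m F = 1%:M.

Definition Eplus (R : realType) (n : nat) (F : 'M[R]_n) := eigenspace F 1.
Definition Eminus (R : realType) (n : nat) (F : 'M[R]_n) := eigenspace F (-1).

Definition Abase (R : realType) (n : nat) (S P : 'M[R]_n) : R :=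
  n%:R ^+ 2 + (\tr S) ^+ 2 - (\tr P) ^+ 2 - (\tr (S *m P)) ^+ 2
  + \tr (S *m P *m S *m P) - n%:R.

Definition Aplus (R : realType) (n : nat) (S P : 'M[R]_n) : R :=
  Abase S P - 2 * n%:R * \tr S + 2 * \tr P * \tr (S *m P).

Definition Aminus (R : realType) (n : nat) (S P : 'M[R]_n) : R :=
  Abase S P + 2 * n%:R * \tr S - 2 * \tr P * \tr (S *m P).

(* Main.v *)
Require Import Defs.
From HB Require Import structures.
From mathcomp Require Import all_boot all_order all_algebra.
From mathcomp Require Import reals.
Import Order.TTheory GRing.Theory Num.Theory.
Local Open Scope ring_scope.
From mathcomp Require Import ring lra.


Section Aux.
Variable R : realType.

Lemma sym_of_inv n (F : 'M[R]_n) : orth_involution F -> F^T = F.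
Proof.
case=> h1 h2.
by rewrite -[F^T]mulmx1 -h1 mulmxA h2 mul1mx.
Qed.

Lemma frob_ge0 m n (Y : 'M[R]_(m, n)) : 0 <= \tr (Y *m Y^T).
Proof.
rewrite /mxtrace; apply: sumr_ge0 => i _; rewrite mxE.
by apply: sumr_ge0 => j _; rewrite mxE -expr2 sqr_ge0.
Qed.


Lemma frob_eq0 m n (Y : 'M[R]_(m, n)) : \tr (Y *m Y^T) = 0 -> Y = 0.
Proof.
rewrite /mxtrace => h; apply/matrixP => i j; rewrite mxE.
have h1 := psumr_eq0P _ h.
have : (Y *m Y^T) i i = 0.
  apply: h1 => // k _; rewrite mxE; apply: sumr_ge0 => l _.
  by rewrite mxE -expr2 sqr_ge0.
rewrite mxE => h2.
have h3 : forall l, Y i l * Y^T l i = 0.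
  move=> l; apply: (psumr_eq0P _ h2) => // k _; by rewrite mxE -expr2 sqr_ge0.
by have /eqP := h3 j; rewrite mxE mulf_eq0 orbb => /eqP.
Qed.

Lemma idem_fact n (pi : 'M[R]_n) : pi *m pi = pi ->
  exists r (c : 'M[R]_(n, r)) (w : 'M[R]_(r, n)),
    [/\ c *m w = pi, w *m c = 1%:M & r = \rank pi].
Proof.
move=> hpi; have := mulmx_base pi; have := row_base_free pi; have := col_base_full pi.
move: (col_base pi) (row_base pi) => c w hc hw hcw.
exists (\rank pi), c, w; split => //.
apply: (row_free_inj hw); rewrite mul1mx; apply: (row_full_inj hc).
by rewrite !mulmxA hcw -mulmxA hcw hpi.
Qed.

Lemma idem_tr n (pi : 'M[R]_n) : pi *m pi = pi -> \tr pi = (\rank pi)%:R.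
Proof.
move=> /idem_fact [r [c [w [hcw h2 hr]]]].
by rewrite -hcw mxtrace_mulC h2 mxtrace1 hcw -hr.
Qed.
End Aux.


Section Main.
Variable R : realType.
Variable n : nat.
Variables pi P : 'M[R]_n.
Hypothesis hpi : pi *m pi = pi.
Hypothesis hpiT : pi^T = pi.
Hypothesis hPP : P *m P = 1%:M.
Hypothesis hPT : P^T = P.

Let hpi' k (X : 'M[R]_(n,k)) : pi *m (pi *m X) = pi *m X.
Proof. by rewrite mulmxA hpi. Qed.
Let hPP' k (X : 'M[R]_(n,k)) : P *m (P *m X) = X.
Proof. by rewrite mulmxA hPP mul1mx. Qed.

Local Notation t := (\tr (pi *m P *m pi *m P)).
Local Notation p := (\tr pi).
Local Notation tau := (\tr (pi *m P)).

Lemma ht : \tr (pi *m (P *m (pi *m (P *m pi)))) = t.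
Proof.
rewrite mxtrace_mulC -!mulmxA hpi mxtrace_mulC -!mulmxA.
by rewrite mxtrace_mulC !mulmxA.
Qed.

Lemma F2 : \tr ((pi *m P *m (1%:M - pi)) *m (pi *m P *m (1%:M - pi))^T) = p - t.
Proof.
have h1T : (1%:M - pi)^T = 1%:M - pi by rewrite linearB /= trmx1 hpiT.
rewrite !trmx_mul h1T hpiT hPT -!mulmxA.
rewrite !(mulmxBl, mulmxBr, mul1mx, mulmx1) !hpi' hPP' hpi subrr subr0.
by rewrite linearB /= ht !mulmxA.
Qed.

Lemma F1 : \tr ((tau *: pi - p *: (pi *m P *m pi)) *m (tau *: pi - p *: (pi *m P *m pi))^T)
  = p * (p * t - tau ^+ 2).
Proof.
have hXT : (pi *m P *m pi)^T = pi *m P *m pi by rewrite !trmx_mul hpiT hPT mulmxA.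
have hX1 : pi *m (pi *m P *m pi) = pi *m P *m pi by rewrite !mulmxA hpi.
have hX2 : (pi *m P *m pi) *m pi = pi *m P *m pi by rewrite -!mulmxA hpi.
have trX : \tr (pi *m P *m pi) = tau by rewrite mxtrace_mulC mulmxA hpi.
have trXX : \tr ((pi *m P *m pi) *m (pi *m P *m pi)) = t.
  by rewrite -ht -!mulmxA hpi'.
rewrite linearB /= !linearZ /= hXT hpiT.
move: hXT hX1 hX2 trX trXX; set X := pi *m P *m pi => hXT hX1 hX2 trX trXX.
rewrite !scalerN !(mulmxDl, mulmxDr) !(mulmxN, mulNmx) -!scalemxAl -!scalemxAr hX1 hX2 hpi.
rewrite !(mxtraceD, linearN, mxtraceZ) /= !mxtraceZ trX trXX.
ring.
Qed.

Local Notation Qf := (4 * ((p * t - tau ^+ 2) + (p - 1) * (p - t))).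

Lemma p_rank : p = (\rank pi)%:R.
Proof. exact: idem_tr. Qed.

Lemma Bge0 : 0 <= p - t.
Proof. rewrite -F2; exact: (@frob_ge0 R). Qed.

Lemma pi0 : \rank pi = 0%N -> Qf = 0.
Proof.
move/eqP; rewrite mxrank_eq0 => /eqP h0.
by rewrite h0 !mul0mx linear0; ring.
Qed.

Lemma Q_ge0 : 0 <= Qf.
Proof.
case: (ltnP 0 (\rank pi)) => hr; last first.
  by rewrite pi0 //; apply/eqP; rewrite -leqn0.
have hp : 1 <= p by rewrite p_rank ler1n.
have hA : 0 <= p * t - tau ^+ 2.
  have := @frob_ge0 R _ _ (tau *: pi - p *: (pi *m P *m pi)).
  by rewrite F1 pmulr_rge0 // (lt_le_trans ltr01 hp).
have hB := Bge0.
apply: mulr_ge0 => //; apply: addr_ge0 => //; apply: mulr_ge0 => //.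
by rewrite subr_ge0.
Qed.

Lemma Q_rank1 : \rank pi = 1%N -> Qf = 0.
Proof.
move=> hr1.
have hp1 : p = 1 by rewrite p_rank hr1.
have [r [c [w [hcw hwc hr]]]] := @idem_fact R _ _ hpi.
have r1 : r = 1%N by rewrite hr.
clear hr; subst r.
set k := (w *m P *m c) 0 0.
have hk : w *m P *m c = k%:M.
  by apply/matrixP => i j; rewrite [i]ord1 [j]ord1 [RHS]mxE eqxx mulr1n.
have hX : pi *m P *m pi = k *: pi.
  rewrite -hcw.
  have -> : c *m w *m P *m (c *m w) = c *m (w *m P *m c) *m w by rewrite !mulmxA.
  by rewrite hk mul_mx_scalar scalemxAl.
have htau : tau = k.
  have <- : \tr (pi *m P *m pi) = tau by rewrite mxtrace_mulC mulmxA hpi.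
  by rewrite hX mxtraceZ hp1 mulr1.
have := F1; rewrite hX htau hp1 scale1r subrr mul0mx linear0 => h.
by rewrite mul1r in h; rewrite subrr mul0r addr0 -h mulr0.
Qed.

Lemma Q_rank2 : (2 <= \rank pi)%N ->
  (Qf = 0 <-> exists eps : R, (eps = 1 \/ eps = -1) /\ pi *m P = eps *: pi).
Proof.
move=> hr; have hp : 2 <= p by rewrite p_rank ler_nat.
split.
- move=> hQ.
  have hA : 0 <= p * t - tau ^+ 2.
    have := @frob_ge0 R _ _ (tau *: pi - p *: (pi *m P *m pi)).
    by rewrite F1 pmulr_rge0 // (lt_le_trans _ hp).
  have hB := Bge0.
  have hB0 : p - t = 0 by nra.
  have hA0 : p * t - tau ^+ 2 = 0 by nra.
  have hZ : pi *m P *m (1%:M - pi) = 0 by apply: (@frob_eq0 R); rewrite F2.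
  have hW : tau *: pi - p *: (pi *m P *m pi) = 0.
    by apply: (@frob_eq0 R); rewrite F1 hA0 mulr0.
  have hp0 : p != 0 by apply/eqP => h; rewrite h in hp; lra.
  set k := tau / p.
  have hPk : pi *m P = k *: pi.
    move: hZ; rewrite mulmxBr mulmx1 => /eqP; rewrite subr_eq0 => /eqP ->.
    move/eqP: hW; rewrite subr_eq0 => /eqP hW.
    have -> : pi *m P *m pi = p^-1 *: (p *: (pi *m P *m pi)).
      by rewrite scalerA mulVf // scale1r.
    by rewrite -hW scalerA /k mulrC.
  have hk2 : k ^+ 2 = 1.
    have e : pi = k ^+ 2 *: pi.
      rewrite -{1}[pi]mulmx1 -hPP mulmxA hPk -scalemxAl hPk scalerA expr2 //.
    have : (k ^+ 2 - 1) *: pi = 0 by rewrite scalerBl scale1r -e subrr.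
    move/eqP; rewrite scaler_eq0 => /orP [/eqP h|]; first by apply/eqP; rewrite -subr_eq0 h.
    by rewrite -mxrank_eq0 => /eqP h0; rewrite h0 in hr.
  exists k; split => //.
  by move/eqP: hk2; rewrite sqrf_eq1 => /orP [] /eqP; auto.
- case=> eps [he hPe].
  have tau_e : tau = eps * p by rewrite hPe mxtraceZ.
  have t_e : t = eps * (eps * p).
    by rewrite hPe -!scalemxAl hpi hPe !mxtraceZ.
  by rewrite t_e tau_e; case: he => ->; ring.
Qed.
End Main.


Section Proj.
Variable R : realType.
Variable n : nat.
Variables S P : 'M[R]_n.
Variable e : R.
Hypothesis hSS : S *m S = 1%:M.
Hypothesis hST : S^T = S.
Hypothesis he : e ^+ 2 = 1.

Lemma two_sc m (X : 'M[R]_(m, n)) : (2^-1 : R) *: (X + X) = X.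
Proof.
rewrite -mulr2n -scaler_nat scalerA mulVf ?scale1r //.
by rewrite pnatr_eq0.
Qed.

Definition proj := (2^-1 : R) *: (1%:M + e *: S).

Lemma proj_sym : proj^T = proj.
Proof. by rewrite /proj linearZ /= linearD /= trmx1 linearZ /= hST. Qed.

Lemma projS : proj *m S = e *: proj.
Proof.
rewrite /proj -scalemxAl mulmxDl mul1mx -scalemxAl hSS scalerA.
rewrite !scalerDr !scalerA addrC; congr (_ + _); first by rewrite mulrC.
by rewrite mulrC mulrA -expr2 he mul1r.
Qed.

Lemma proj_idem : proj *m proj = proj.
Proof.
rewrite {1}/proj -scalemxAr mulmxDr mulmx1 -scalemxAr projS scalerA -expr2 he scale1r.
exact: two_sc.
Qed.

Lemma eig_proj : (eigenspace S e == proj)%MS.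
Proof.
apply/andP; split; last by apply/eigenspaceP; exact: projS.
set K := eigenspace S e.
have hK : K *m S = e *: K by apply/eigenspaceP.
have -> : K = K *m proj.
  rewrite /proj -scalemxAr mulmxDr mulmx1 -scalemxAr hK scalerA -expr2 he scale1r.
  by rewrite two_sc.
exact: submxMl.
Qed.

Lemma tr_proj : \tr proj = 2^-1 * (n%:R + e * \tr S).
Proof. by rewrite /proj mxtraceZ mxtraceD mxtrace1 mxtraceZ. Qed.

Lemma tau_proj : \tr (proj *m P) = 2^-1 * (\tr P + e * \tr (S *m P)).
Proof. by rewrite /proj -scalemxAl mulmxDl mul1mx -scalemxAl mxtraceZ mxtraceD mxtraceZ. Qed.

Lemma t_proj : P *m P = 1%:M -> \tr (proj *m P *m proj *m P) =
   2^-1 * (2^-1 * (n%:R + 2 * e * \tr S + \tr (S *m P *m S *m P))).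
Proof.
move=> hPP.
rewrite /proj -!scalemxAl -scalemxAr -scalemxAl !mxtraceZ.
rewrite !(mulmxDl, mulmxDr, mul1mx, mulmx1) -!scalemxAl -!scalemxAr -!scalemxAl scalerA.
have he' : e * e = 1 by rewrite -expr2.
have h1 : \tr (P *m S *m P) = \tr S by rewrite mxtrace_mulC mulmxA hPP mul1mx.
have h2 : \tr (S *m P *m P) = \tr S by rewrite -mulmxA hPP mulmx1.
rewrite he' scale1r !mxtraceD !mxtraceZ hPP mxtrace1 h1 h2.
ring.
Qed.

Lemma Q_proj : P *m P = 1%:M ->
  4 * ((\tr proj * \tr (proj *m P *m proj *m P) - \tr (proj *m P) ^+ 2)
       + (\tr proj - 1) * (\tr proj - \tr (proj *m P *m proj *m P)))
  = Abase S P + e * (2 * n%:R * \tr S - 2 * \tr P * \tr (S *m P)).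
Proof.
move=> hPP; rewrite t_proj // tau_proj tr_proj /Abase.
have : (e == 1) || (e == -1) by rewrite -sqrf_eq1 he.
by case/orP => /eqP ->; field.
Qed.
End Proj.



Lemma key (R : realType) n (S P : 'M[R]_n) (e : R)
  (hS : orth_involution S) (hP : orth_involution P) (he : e ^+ 2 = 1) (A : R)
  (hA : A = Abase S P + e * (2 * n%:R * \tr S - 2 * \tr P * \tr (S *m P))) :
  0 <= A /\ (\rank (eigenspace S e) = 1%N -> A = 0) /\
  ((2 <= \rank (eigenspace S e))%N -> (A = 0 <->
     exists eps : R, (eps = 1 \/ eps = -1) /\ (eigenspace S e <= eigenspace P eps)%MS)).
Proof.
have hST := @sym_of_inv R _ _ hS; have hPT := @sym_of_inv R _ _ hP.
have hSS := hS.1; have hPP := hP.1.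
rewrite hA -(@Q_proj R n S P e he hPP).
have hE := eqmxP (@eig_proj R n S e hSS he).
have hpi := @proj_idem R n S e hSS he.
have hpiT := @proj_sym R n S e hST.
rewrite (eqmx_rank (@eig_proj R n S e hSS he)).
split; first exact: (@Q_ge0 R n _ P hpi hpiT hPP hPT).
split; first exact: (@Q_rank1 R n _ P hpi hpiT hPT).
move=> h2; rewrite (@Q_rank2 R n _ P hpi hpiT hPP hPT h2).
split; case=> eps [h1 h3]; exists eps; split => //.
  by rewrite hE; apply/eigenspaceP.
by move: h3; rewrite hE => /eigenspaceP.
Qed.

Theorem theorem5p4 (R : realType) (n : nat) (M : Type)
    (S P : M -> 'M[R]_n)
    (hS : forall x, orth_involution (S x))
    (hP : forall x, orth_involution (P x))
    (hS1 : S <> (fun _ => 1%:M)) (hSm1 : S <> (fun _ => - 1%:M))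
    (hP1 : P <> (fun _ => 1%:M)) (hPm1 : P <> (fun _ => - 1%:M)) :
  (* (i) *)
  (forall x, 0 <= Aplus (S x) (P x) /\ 0 <= Aminus (S x) (P x)) /\
  (* (ii) *)
  ((forall x, \rank (Eplus (S x)) = 1%N) ->
     forall x, Aminus (S x) (P x) = 0) /\
  ((forall x, (2 <= \rank (Eplus (S x)))%N) ->
     forall x, Aminus (S x) (P x) = 0 <->
       exists eps : R, (eps = 1 \/ eps = -1) /\
         (Eplus (S x) <= eigenspace (P x) eps)%MS) /\
  (* (iii) *)
  ((forall x, \rank (Eminus (S x)) = 1%N) ->
     forall x, Aplus (S x) (P x) = 0) /\
  ((forall x, (2 <= \rank (Eminus (S x)))%N) ->
     forall x, Aplus (S x) (P x) = 0 <->
       exists eps : R, (eps = 1 \/ eps = -1) /\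
         (Eminus (S x) <= eigenspace (P x) eps)%MS).
Proof.
have Km x := @key R n (S x) (P x) 1 (hS x) (hP x) (expr1n _ _) (Aminus (S x) (P x))
  (ltac:(rewrite /Aminus; ring)).
have Kp x := @key R n (S x) (P x) (-1) (hS x) (hP x) (ltac:(by rewrite sqrrN expr1n))
  (Aplus (S x) (P x)) (ltac:(rewrite /Aplus; ring)).
split; first by move=> x; split; [exact: (Kp x).1 | exact: (Km x).1].
split; first by move=> h x; exact: ((Km x).2.1 (h x)).
split; first by move=> h x; exact: ((Km x).2.2 (h x)).
split; first by move=> h x; exact: ((Kp x).2.1 (h x)).
by move=> h x; exact: ((Kp x).2.2 (h x)).
Qed.
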